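(* Let $F$ be a special multifield and $F^\bullet=F\setminus\{0\}$. Define a relation on $F^\bullet\times F^\bullet$ by $\langle a,b\rangle\equiv\langle c,d\rangle$ iff $ab=cd$ and $a\in c+d$. Then $(F^\bullet,\equiv,-1)$ is a special group.
   Context: A multiring is a tuple $(R,+,\cdot,-,0,1)$ with $+:R\times R\to\mathcal P(R)\setminus\{\emptyset\}$ satisfying: $z\in x+y\Rightarrow x\in z+(-y)$ and $y\in(-x)+z$; $y\in0+x\iff y=x$; $(x+y)+z=x+(y+z)$ (with $Z+w=\bigcup_{z\in Z}(z+w)$); $x+y=y+x$; $(R,\cdot,1)$ a commutative monoid; $a0=0$; $c\in a+b\Rightarrow cd\in ad+bd$. A multifield is a multiring with every nonzero element invertible. A special multifield is a multifield $F$ such that, with $F^\bullet=F\setminus\{0\}$: (i) $a^2=1$ for all $a\in F^\bullet$; (ii) $a+(-a)=F$ for all $a\in F^\bullet$; (iii) for $a,b,c,d\in F^\bullet$, $ab=cd$ and $a\in c+d$ imply $c\in a+b$; (iv) for $a,\dots,f\in F^\bullet$, $ab=cd=ef$, $a\in c+d$, $c\in e+f$ imply $a\in e+f$; (v) for $a,b,c,d\in F^\bullet$, if there are $x,y,z\in F^\bullet$ with $ax=cy$, $a=xz$, $c=yz$, $a\in c+y$, $b\in x+z$, $d\in y+z$, then there are $t,v,w\in F^\bullet$ with $bt=cv$, $b=tw$, $c=vw$, $b\in c+v$, $a\in t+w$, $d\in v+w$. A special group is a tuple $(G,-1,\equiv)$ where $G$ is a group with $g^2=1$ for all $g$, $-1\in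 G$, and $\equiv$ a relation on $G\times G$ such that: (SG0) $\equiv$ is an equivalence relation; (SG1) $\langle a,b\rangle\equiv\langle b,a\rangle$; (SG2) $\langle a,-a\rangle\equiv\langle1,-1\rangle$ with $-a=(-1)a$; (SG3) $\langle a,b\rangle\equiv\langle c,d\rangle\Rightarrow ab=cd$; (SG4) $\langle a,b\rangle\equiv\langle c,d\rangle\Rightarrow\langle a,-c\rangle\equiv\langle -b,d\rangle$; (SG5) $\langle a,b\rangle\equiv\langle c,d\rangle\Rightarrow\langle ga,gb\rangle\equiv\langle gc,gd\rangle$; (SG6) the relation on $G^3$ given by $\langle a_1,a_2,a_3\rangle\equiv\langle b_1,b_2,b_3\rangle$ iff $\exists x,y,z$ with $\langle a_1,x\rangle\equiv\langle b_1,y\rangle$, $\langle a_2,a_3\rangle\equiv\langle x,z\rangle$, $\langle b_2,b_3\rangle\equiv\langle y,z\rangle$ is transitive. *)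

(* Defs.v *)
(* Data of a multiring.  [add x y z] means  z \in x + y  (multivalued sum). *)
Record mr := MR {
  car : Type;
  add : car -> car -> car -> Prop;
  opp : car -> car;
  zero : car;
  one : car;
  mul : car -> car -> car
}.

Arguments add {m} _ _ _.
Arguments opp {m} _.
Arguments zero {m}.
Arguments one {m}.
Arguments mul {m} _ _.

Record is_multiring (F : mr) : Prop := {
  mr_nonempty : forall x y : car F, exists z, add x y z;
  mr_rev : forall x y z : car F, add x y z -> add z (opp y) x /\ add (opp x) z y;
  mr_zero : forall x y : car F, add zero x y <-> y = x;
  mr_assoc : forall x y z v : car F,
      (exists t, add x y t /\ add t z v) <-> (exists t, add y z t /\ add x t v);
  mr_comm : forall x y v : car F, add x y v <-> add y x v;
  mr_mulA : forall x y z : car F, mul x (mul y z) = mul (mul x y) z;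
  mr_mulC : forall x y : car F, mul x y = mul y x;
  mr_mul1 : forall x : car F, mul one x = x;
  mr_mul0 : forall a : car F, mul a zero = zero;
  mr_distr : forall a b c d : car F, add a b c -> add (mul a d) (mul b d) (mul c d)
}.

Record is_multifield (F : mr) : Prop := {
  mf_mr : is_multiring F;
  mf_nontriv : (one : car F) <> zero;
  mf_inv : forall x : car F, x <> zero -> exists y, mul x y = one
}.

Record is_special_multifield (F : mr) : Prop := {
  smf_mf : is_multifield F;
  smf_sq : forall a : car F, a <> zero -> mul a a = one;
  smf_opp : forall a : car F, a <> zero -> forall x, add a (opp a) x;
  smf_iii : forall a b c d : car F, a <> zero -> b <> zero -> c <> zero -> d <> zero ->
      mul a b = mul c d -> add c d a -> add a b c;
  smf_iv : forall a b c d e f : car F,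
      a <> zero -> b <> zero -> c <> zero -> d <> zero -> e <> zero -> f <> zero ->
      mul a b = mul c d -> mul c d = mul e f -> add c d a -> add e f c -> add e f a;
  smf_v : forall a b c d : car F, a <> zero -> b <> zero -> c <> zero -> d <> zero ->
      (exists x y z : car F, x <> zero /\ y <> zero /\ z <> zero /\
         mul a x = mul c y /\ a = mul x z /\ c = mul y z /\
         add c y a /\ add x z b /\ add y z d) ->
      (exists t v w : car F, t <> zero /\ v <> zero /\ w <> zero /\
         mul b t = mul c v /\ b = mul t w /\ c = mul v w /\
         add c v b /\ add t w a /\ add v w d)
}.

(* Special groups: (G, -1, equiv), with G a group of exponent 2.
   [eqv a b c d] stands for  <a,b> == <c,d>. *)
Definition ternary {G : Type} (eqv : G -> G -> G -> G -> Prop)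
    (a1 a2 a3 b1 b2 b3 : G) : Prop :=
  exists x y z, eqv a1 x b1 y /\ eqv a2 a3 x z /\ eqv b2 b3 y z.

Record is_special_group {G : Type} (gm : G -> G -> G) (g1 m1 : G)
    (eqv : G -> G -> G -> G -> Prop) : Prop := {
  sg_assoc : forall x y z, gm x (gm y z) = gm (gm x y) z;
  sg_idl : forall x, gm g1 x = x;
  sg_idr : forall x, gm x g1 = x;
  sg_inv : forall x, exists y, gm x y = g1 /\ gm y x = g1;
  sg_sq : forall g, gm g g = g1;
  SG0_refl : forall a b, eqv a b a b;
  SG0_sym : forall a b c d, eqv a b c d -> eqv c d a b;
  SG0_trans : forall a b c d e f, eqv a b c d -> eqv c d e f -> eqv a b e f;
  SG1 : forall a b, eqv a b b a;
  SG2 : forall a, eqv a (gm m1 a) g1 m1;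
  SG3 : forall a b c d, eqv a b c d -> gm a b = gm c d;
  SG4 : forall a b c d, eqv a b c d -> eqv a (gm m1 c) (gm m1 b) d;
  SG5 : forall a b c d g, eqv a b c d -> eqv (gm g a) (gm g b) (gm g c) (gm g d);
  SG6 : forall a1 a2 a3 b1 b2 b3 c1 c2 c3,
      ternary eqv a1 a2 a3 b1 b2 b3 -> ternary eqv b1 b2 b3 c1 c2 c3 ->
      ternary eqv a1 a2 a3 c1 c2 c3
}.

Definition Fdot (F : mr) : Type := { x : car F | x <> zero }.

Lemma mf_mul_nz (F : mr) (H : is_multifield F) (a b : car F) :
  a <> zero -> b <> zero -> mul a b <> zero.
Proof.
  intros Ha Hb Hab. destruct H as [Hm _ Hinv].
  destruct (Hinv a Ha) as [a' Ha'].
  apply Hb.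
  rewrite <- (mr_mul1 _ Hm b), <- Ha', (mr_mulC _ Hm a a'), <- (mr_mulA _ Hm), Hab.
  apply (mr_mul0 _ Hm).
Qed.

Lemma mf_one_nz (F : mr) (H : is_multifield F) : (one : car F) <> zero.
Proof. exact (mf_nontriv _ H). Qed.

Lemma mf_m1_nz (F : mr) (H : is_multifield F) : opp (one : car F) <> zero.
Proof.
  intro E. destruct H as [Hm Hn _]. apply Hn.
  assert (H01 : add (zero : car F) one one) by (apply (mr_zero _ Hm); reflexivity).
  destruct (mr_rev _ Hm _ _ _ H01) as [H1 _].
  rewrite E in H1. apply (mr_comm _ Hm) in H1. apply (mr_zero _ Hm) in H1.
  symmetry; exact H1.
Qed.

Definition dot_mul (F : mr) (H : is_multifield F) (x y : Fdot F) : Fdot F :=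
  exist _ (mul (proj1_sig x) (proj1_sig y))
        (mf_mul_nz F H _ _ (proj2_sig x) (proj2_sig y)).

Definition dot_one (F : mr) (H : is_multifield F) : Fdot F :=
  exist _ one (mf_one_nz F H).

Definition dot_m1 (F : mr) (H : is_multifield F) : Fdot F :=
  exist _ (opp one) (mf_m1_nz F H).

Definition dot_equiv (F : mr) (a b c d : Fdot F) : Prop :=
  mul (proj1_sig a) (proj1_sig b) = mul (proj1_sig c) (proj1_sig d) /\
  add (proj1_sig c) (proj1_sig d) (proj1_sig a).

(* Main.v *)
Require Import Defs.
From Stdlib Require Import ProofIrrelevance.

Definition Ec (F : mr) (a b c d : car F) : Prop := mul a b = mul c d /\ add c d a.

Definition Tc (F : mr) (a1 a2 a3 b1 b2 b3 : car F) : Prop :=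
  exists x y z : car F, x <> zero /\ y <> zero /\ z <> zero /\
    Ec F a1 x b1 y /\ Ec F a2 a3 x z /\ Ec F b2 b3 y z.

Section S.
Local Ltac tsplit := split; [|split; [|split; [|split; [|split]]]].
Local Ltac hm H := pose proof (mf_mr _ (smf_mf _ H)) as Hm.

Lemma mA {F} (H : is_special_multifield F) (x y z : car F) : mul x (mul y z) = mul (mul x y) z.
Proof. hm H. exact (mr_mulA _ Hm x y z). Qed.
Lemma mC {F} (H : is_special_multifield F) (x y : car F) : mul x y = mul y x.
Proof. hm H. exact (mr_mulC _ Hm x y). Qed.
Lemma m1l {F} (H : is_special_multifield F) (x : car F) : mul one x = x.
Proof. hm H. exact (mr_mul1 _ Hm x). Qed.
Lemma m1r {F} (H : is_special_multifield F) (x : car F) : mul x one = x.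
Proof. rewrite (mC H). apply m1l; auto. Qed.
Lemma mCA {F} (H : is_special_multifield F) (x y z : car F) : mul x (mul y z) = mul y (mul x z).
Proof. rewrite (mA H), (mC H x y), <- (mA H). reflexivity. Qed.
Lemma sq {F} (H : is_special_multifield F) (x : car F) : x <> zero -> mul x x = one.
Proof. apply (smf_sq _ H). Qed.
Lemma sqK {F} (H : is_special_multifield F) (x y : car F) : x <> zero -> mul x (mul x y) = y.
Proof. intro. rewrite (mA H), (sq H x), (m1l H); auto. Qed.
Lemma sqK' {F} (H : is_special_multifield F) (x y : car F) : x <> zero -> mul x (mul y x) = y.
Proof. intro. rewrite (mC H y x). apply sqK; auto. Qed.
Lemma m4 {F} (H : is_special_multifield F) (g a b : car F) :
  mul (mul g a) (mul g b) = mul (mul g g) (mul a b).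
Proof. rewrite <- (mA H g a), (mCA H a g b), (mA H g g). reflexivity. Qed.
Lemma nzm {F} (H : is_special_multifield F) (a b : car F) :
  a <> zero -> b <> zero -> mul a b <> zero.
Proof. apply mf_mul_nz. apply (smf_mf _ H). Qed.

Lemma oppK {F} (H : is_special_multifield F) (x : car F) : opp (opp x) = x.
Proof. hm H.
  assert (h : add zero x x) by (apply (mr_zero _ Hm); reflexivity).
  apply (mr_rev _ Hm) in h. destruct h as [h _].
  apply (mr_rev _ Hm) in h. destruct h as [h _].
  apply (mr_zero _ Hm) in h. symmetry; exact h. Qed.

Lemma add_self {F} (H : is_special_multifield F) (a b : car F) : a <> zero -> add a b a.
Proof. intro Ha. hm H. pose proof (smf_opp _ H a Ha b) as h.
  apply (mr_rev _ Hm) in h. destruct h as [h _]. rewrite (oppK H) in h.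
  apply (mr_comm _ Hm); exact h. Qed.

Lemma m1opp {F} (H : is_special_multifield F) (x : car F) : mul (opp one) x = opp x.
Proof. hm H.
  assert (h : add zero (one : car F) one) by (apply (mr_zero _ Hm); reflexivity).
  apply (mr_rev _ Hm) in h. destruct h as [h _].
  apply (mr_distr _ Hm _ _ _ x) in h.
  rewrite (m1l H), (mC H zero), (mr_mul0 _ Hm) in h.
  apply (mr_rev _ Hm) in h. destruct h as [_ h].
  apply (mr_comm _ Hm) in h. apply (mr_zero _ Hm) in h. exact h. Qed.

Lemma Ec_refl {F} (H : is_special_multifield F) (a b : car F) : a <> zero -> Ec F a b a b.
Proof. intro. split. reflexivity. apply add_self; auto. Qed.

Lemma Ec_sym {F} (H : is_special_multifield F) (a b c d : car F) :
  a <> zero -> b <> zero -> c <> zero -> d <> zero -> Ec F a b c d -> Ec F c d a b.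
Proof. intros H0 H1 H2 H3 [e h]. split. symmetry; exact e.
  exact (smf_iii _ H _ _ _ _ H0 H1 H2 H3 e h). Qed.

Lemma Ec_trans {F} (H : is_special_multifield F) (a b c d e f : car F) :
  a <> zero -> b <> zero -> c <> zero -> d <> zero -> e <> zero -> f <> zero ->
  Ec F a b c d -> Ec F c d e f -> Ec F a b e f.
Proof. intros ? ? ? ? ? ? [e1 h1] [e2 h2]. split. congruence.
  exact (smf_iv _ H a b c d e f H0 H1 H2 H3 H4 H5 e1 e2 h1 h2). Qed.

Lemma Ec_comm {F} (H : is_special_multifield F) (a b : car F) :
  a <> zero -> Ec F a b b a.
Proof. intro. hm H. split. apply mC; auto. apply (mr_comm _ Hm). apply add_self; auto. Qed.

Lemma Ec_scale {F} (H : is_special_multifield F) (g a b c d : car F) :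
  Ec F a b c d -> Ec F (mul g a) (mul g b) (mul g c) (mul g d).
Proof. hm H. intros [e h]. split.
  rewrite !(m4 H), e. reflexivity.
  pose proof (mr_distr _ Hm _ _ _ g h) as h'.
  rewrite (mC H c g), (mC H d g), (mC H a g) in h'. exact h'. Qed.

Lemma swap_prod {F} (H : is_special_multifield F) (a b c d : car F) :
  b <> zero -> c <> zero -> mul a b = mul c d -> mul a c = mul b d.
Proof. intros Hb Hc E.
  transitivity (mul b (mul b (mul a c))). symmetry; apply sqK; auto.
  f_equal. rewrite (mA H), (mC H b a), E, <- (mA H). apply sqK'; auto. Qed.

Lemma Tc_sym {F} (H : is_special_multifield F) (a1 a2 a3 b1 b2 b3 : car F) :
  a1 <> zero -> b1 <> zero ->
  Tc F a1 a2 a3 b1 b2 b3 -> Tc F b1 b2 b3 a1 a2 a3.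
Proof. intros ? ? (x & y & z & ? & ? & ? & h1 & h2 & h3).
  exists y, x, z. tsplit; auto. apply Ec_sym; auto.
Qed.

Lemma Tc_step23 {F} (H : is_special_multifield F) (a1 a2 a3 b1 b2 b3 c2 c3 : car F) :
  b2 <> zero -> b3 <> zero -> c2 <> zero -> c3 <> zero ->
  Tc F a1 a2 a3 b1 b2 b3 -> Ec F b2 b3 c2 c3 -> Tc F a1 a2 a3 b1 c2 c3.
Proof. intros ? ? ? ? (x & y & z & ? & ? & ? & h1 & h2 & h3) e.
  exists x, y, z. tsplit; auto.
  apply (Ec_trans H _ _ b2 b3); auto. apply Ec_sym; auto. Qed.

Lemma Tc_r23 {F} (H : is_special_multifield F) (a1 a2 a3 b1 b2 b3 : car F) :
  b2 <> zero -> b3 <> zero ->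
  Tc F a1 a2 a3 b1 b2 b3 -> Tc F a1 a2 a3 b1 b3 b2.
Proof. intros. apply (Tc_step23 H a1 a2 a3 b1 b2 b3 b3 b2); auto. apply Ec_comm; auto. Qed.

Lemma Tc_scale {F} (H : is_special_multifield F) (g a1 a2 a3 b1 b2 b3 : car F) :
  g <> zero -> Tc F a1 a2 a3 b1 b2 b3 ->
  Tc F (mul g a1) (mul g a2) (mul g a3) (mul g b1) (mul g b2) (mul g b3).
Proof. intros Hg (x & y & z & ? & ? & ? & h1 & h2 & h3).
  exists (mul g x), (mul g y), (mul g z).
  tsplit; try apply nzm; auto; apply Ec_scale; auto. Qed.

Lemma Tc_prod {F} (H : is_special_multifield F) (a1 a2 a3 b1 b2 b3 : car F) :
  Tc F a1 a2 a3 b1 b2 b3 -> mul a1 (mul a2 a3) = mul b1 (mul b2 b3).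
Proof. intros (x & y & z & ? & ? & ? & [e1 _] & [e2 _] & [e3 _]).
  rewrite e2, e3, !(mA H), e1. reflexivity. Qed.

Lemma Tc_v {F} (H : is_special_multifield F) (A B C D : car F) :
  A <> zero -> B <> zero -> C <> zero -> D <> zero ->
  Tc F A B (mul A B) C D (mul C D) -> Tc F B A (mul A B) C D (mul C D).
Proof. intros HA HB HC HD (X & Y & Z & ? & ? & ? & [e1 h1] & [e2 h2] & [e3 h3]).
  destruct (smf_v _ H A B C D HA HB HC HD) as (t & v & w & ? & ? & ? & f1 & f2 & f3 & g1 & g2 & g3).
  { exists X, Y, Z. repeat split; auto.
    rewrite <- e2. symmetry; apply sqK'; auto.
    rewrite <- e3. symmetry; apply sqK'; auto. }
  exists t, v, w. repeat split; auto.
  rewrite <- f2. apply sqK; auto.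
  rewrite <- f3. apply sqK'; auto.
Qed.

Lemma Tc_l12 {F} (H : is_special_multifield F) (a1 a2 a3 b1 b2 b3 : car F) :
  a1 <> zero -> a2 <> zero -> a3 <> zero -> b1 <> zero -> b2 <> zero -> b3 <> zero ->
  Tc F a1 a2 a3 b1 b2 b3 -> Tc F a2 a1 a3 b1 b2 b3.
Proof. intros ? ? ? ? ? ? T.
  set (g := mul a1 (mul a2 a3)).
  assert (Hg : g <> zero) by (unfold g; repeat apply nzm; auto).
  assert (Eg : g = mul b1 (mul b2 b3)) by (apply (Tc_prod H _ _ _ _ _ _ T)).
  pose proof (Tc_scale H g _ _ _ _ _ _ Hg T) as T1.
  assert (e3 : mul g a3 = mul (mul g a1) (mul g a2)).
  { rewrite (m4 H), (sq H g Hg), (m1l H). unfold g.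
    rewrite (mA H a1 a2 a3), <- (mA H (mul a1 a2) a3 a3), (sq H a3), (m1r H); auto. }
  assert (e3' : mul g b3 = mul (mul g b1) (mul g b2)).
  { rewrite (m4 H), (sq H g Hg), (m1l H). rewrite Eg.
    rewrite (mA H b1 b2 b3), <- (mA H (mul b1 b2) b3 b3), (sq H b3), (m1r H); auto. }
  rewrite e3, e3' in T1.
  apply Tc_v in T1; try apply nzm; auto.
  rewrite <- e3, <- e3' in T1.
  apply (Tc_scale H g) in T1; auto.
  rewrite !(sqK H g) in T1; auto.
Qed.

Lemma Tc_r12 {F} (H : is_special_multifield F) (a1 a2 a3 b1 b2 b3 : car F) :
  a1 <> zero -> a2 <> zero -> a3 <> zero -> b1 <> zero -> b2 <> zero -> b3 <> zero ->
  Tc F a1 a2 a3 b1 b2 b3 -> Tc F a1 a2 a3 b2 b1 b3.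
Proof. intros. apply Tc_sym; auto. apply Tc_l12; auto. apply Tc_sym; auto. Qed.

Lemma Tc_step12 {F} (H : is_special_multifield F) (a1 a2 a3 b1 b2 b3 c1 c2 : car F) :
  a1 <> zero -> a2 <> zero -> a3 <> zero -> b1 <> zero -> b2 <> zero -> b3 <> zero ->
  c1 <> zero -> c2 <> zero ->
  Tc F a1 a2 a3 b1 b2 b3 -> Ec F b1 b2 c1 c2 -> Tc F a1 a2 a3 c1 c2 b3.
Proof. intros ? ? ? ? ? ? ? ? T e.
  apply Tc_r12 in T; auto. apply Tc_r23 in T; auto.
  apply Tc_r12 in T; auto. apply Tc_r23 in T; auto.
  apply (Tc_step23 H _ _ _ _ _ _ c1 c2) in T; auto.
  apply Tc_r12 in T; auto. apply Tc_r23 in T; auto.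
Qed.

Lemma Tc_trans {F} (H : is_special_multifield F) (a1 a2 a3 b1 b2 b3 c1 c2 c3 : car F) :
  a1 <> zero -> a2 <> zero -> a3 <> zero -> b1 <> zero -> b2 <> zero -> b3 <> zero ->
  c1 <> zero -> c2 <> zero -> c3 <> zero ->
  Tc F a1 a2 a3 b1 b2 b3 -> Tc F b1 b2 b3 c1 c2 c3 -> Tc F a1 a2 a3 c1 c2 c3.
Proof. intros ? ? ? ? ? ? ? ? ? T (x & y & z & ? & ? & ? & h1 & h2 & h3).
  apply (Tc_step23 H _ _ _ _ _ _ x z) in T; auto.
  apply (Tc_step12 H _ _ _ _ _ _ c1 y) in T; auto.
  apply (Tc_step23 H _ _ _ _ _ _ c2 c3) in T; auto.
  apply Ec_sym; auto.
Qed.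

End S.

Lemma dot_eq (F : mr) (x y : Fdot F) : proj1_sig x = proj1_sig y -> x = y.
Proof. destruct x as [x hx], y as [y hy]; simpl; intro e; subst.
  f_equal. apply proof_irrelevance. Qed.

Lemma tern_Tc (F : mr) (a1 a2 a3 b1 b2 b3 : Fdot F) :
  ternary (dot_equiv F) a1 a2 a3 b1 b2 b3 <->
  Tc F (proj1_sig a1) (proj1_sig a2) (proj1_sig a3) (proj1_sig b1) (proj1_sig b2) (proj1_sig b3).
Proof. split.
  - intros (x & y & z & h1 & h2 & h3).
    exists (proj1_sig x), (proj1_sig y), (proj1_sig z).
    repeat split; try apply proj2_sig; apply h1 || apply h2 || apply h3.
  - intros (x & y & z & hx & hy & hz & h1 & h2 & h3).
    exists (exist _ x hx), (exist _ y hy), (exist _ z hz). repeat split; simpl;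
    apply h1 || apply h2 || apply h3.
Qed.

Theorem theorem5p10 (F : mr) (H : is_special_multifield F) :
  is_special_group (dot_mul F (smf_mf F H)) (dot_one F (smf_mf F H))
                   (dot_m1 F (smf_mf F H)) (dot_equiv F).
Proof.
  split.
  - intros [x hx] [y hy] [z hz]. apply dot_eq; simpl. apply mA; auto.
  - intros [x hx]. apply dot_eq; simpl. apply m1l; auto.
  - intros [x hx]. apply dot_eq; simpl. apply m1r; auto.
  - intros x. exists x. split; apply dot_eq; destruct x as [x hx]; simpl; apply sq; auto.
  - intros [x hx]. apply dot_eq; simpl. apply sq; auto.
  - intros [a ha] [b hb]. apply Ec_refl; auto.
  - intros [a ha] [b hb] [c hc] [d hd]. apply Ec_sym; auto.
  - intros [a ha] [b hb] [c hc] [d hd] [e he] [f hf]. apply Ec_trans; auto.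
  - intros [a ha] [b hb]. apply Ec_comm; auto.
  - intros [a ha]. unfold dot_equiv; simpl. split.
    + rewrite (mCA H), (sq H a ha), (m1r H), (m1l H). reflexivity.
    + exact (smf_opp _ H one (mf_one_nz _ (smf_mf F H)) a).
  - intros [a ha] [b hb] [c hc] [d hd] [e _]. apply dot_eq; simpl; exact e.
  - intros [a ha] [b hb] [c hc] [d hd] h. unfold dot_equiv in *; simpl in *.
    pose proof (mf_m1_nz _ (smf_mf F H)) as hm1.
    pose proof (mf_mr _ (smf_mf _ H)) as Hm.
    destruct h as [e h]. split.
    + rewrite (mCA H), <- (mA H). f_equal. apply swap_prod; auto.
    + apply (smf_iii _ H (mul (opp one) b) d a (mul (opp one) c)); try apply nzm; auto.
      * rewrite <- (mA H), (mCA H a). f_equal. symmetry. apply swap_prod; auto.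
      * assert (h' : Ec F c d a b) by (apply Ec_sym; auto; split; auto).
        destruct h' as [_ h'].
        apply (mr_rev _ Hm) in h'. destruct h' as [_ h'].
        apply (mr_distr _ Hm _ _ _ (opp one)) in h'.
        rewrite !(mC H _ (opp one)), !(m1opp H), (oppK H) in h'.
        rewrite !(m1opp H). exact h'.
  - intros [a ha] [b hb] [c hc] [d hd] [g hg] h. apply Ec_scale; auto.
  - intros [a1 ?] [a2 ?] [a3 ?] [b1 ?] [b2 ?] [b3 ?] [c1 ?] [c2 ?] [c3 ?] h1 h2.
    apply tern_Tc in h1. apply tern_Tc in h2. apply tern_Tc. simpl in *.
    apply (Tc_trans H a1 a2 a3 b1 b2 b3); auto.
Qed.
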